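(* Let $X$ be an $n$-dimensional polyhedral normed space and let $2 \leq k \leq n-1$. Let $Y \subseteq X$ be a $k$-dimensional subspace such that every projection in $\mathcal{P}_{\min}(X, Y)$ has at most $m$ different norming pairs, where $m$ is a fixed positive integer. Then there exists $r>0$ such that for every $k$-dimensional subspace $Y_0 \subseteq X$ with $d(Y, Y_0) \leq r$, every projection in $\mathcal{P}_{\min}(X, Y_0)$ has at most $m$ different norming pairs.
   Context: A normed space $X=(\mathbb{R}^n,\|\cdot\|)$ is polyhedral if its unit ball is a convex polytope. A projection onto $Y$ is a linear $P:X\to Y$ with $P|_Y=\mathrm{id}_Y$; $\lambda(Y,X)$ is the infimum of their operator norms and $\mathcal{P}_{\min}(X,Y)$ the set of projections of norm $\lambda(Y,X)$. A norming pair for a projection $P$ is a pair $(x,f)\in \mathrm{ext}\,B_X\times \mathrm{ext}\,B_{X^*}$ (extreme points of the unit balls of $X$ and $X^*$) with $f(P(x))=\|P\|$. For $k$-dimensional subspaces $Y,Z$, $d(Y,Z)$ is the Hausdorff distance between the unit spheres of $Y$ and $Z$. *)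

(* Defs.v *)
(* R : realType (mathcomp-analysis reals), vectors 'rV[R]_n,
   subspaces as row spaces of matrices (mxalgebra). *)
From HB Require Import structures.
From mathcomp Require Import all_boot all_order all_algebra.
From mathcomp Require Import classical_sets reals.
Set Implicit Arguments. Unset Strict Implicit. Unset Printing Implicit Defensive.
Import Order.TTheory GRing.Theory Num.Theory.
Local Open Scope ring_scope.
Local Open Scope classical_set_scope.

Section Defs.
Variables (R : realType) (n : nat).
Implicit Types (N : 'rV[R]_n -> R) (x y f : 'rV[R]_n) (P Y : 'M[R]_n).

Definition is_norm N :=
  [/\ forall x, N x = 0 -> x = 0,
      forall (a : R) x, N (a *: x) = `|a| * N x
    & forall x y, N (x + y) <= N x + N y].

Definition conv_hull (s : seq 'rV[R]_n) : set 'rV[R]_n :=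
  [set x | exists w : 'I_(size s) -> R,
     [/\ forall i, 0 <= w i, \sum_i w i = 1 & x = \sum_i w i *: s`_(val i)]].

Definition ball1 N : set 'rV[R]_n := [set x | N x <= 1].

Definition polyhedral N := exists s : seq 'rV[R]_n, ball1 N = conv_hull s.

(* pairing of a functional f (represented by a row vector) with x *)
Definition pairing f x : R := (x *m f^T) 0 0.

Definition dual_norm N f : R := sup [set pairing f x | x in ball1 N].

Definition dual_ball1 N : set 'rV[R]_n := [set f | dual_norm N f <= 1].

Definition extreme (S : set 'rV[R]_n) x :=
  S x /\ forall y z (t : R), S y -> S z -> 0 < t < 1 ->
    x = t *: y + (1 - t) *: z -> y = x /\ z = x.

(* P (acting on row vectors x |-> x *m P) is a projection onto the row space of Y *)
Definition is_proj Y P :=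
  (P <= Y)%MS /\ forall y : 'rV[R]_n, (y <= Y)%MS -> y *m P = y.

Definition op_norm N P : R := sup [set N (x *m P) | x in ball1 N].

Definition proj_const N Y : R := inf [set op_norm N P | P in is_proj Y].

Definition is_min_proj N Y P := is_proj Y P /\ op_norm N P = proj_const N Y.

Definition norming_pair N P x f :=
  [/\ extreme (ball1 N) x, extreme (dual_ball1 N) f
    & pairing f (x *m P) = op_norm N P].

Definition at_most_norming N P (m : nat) :=
  exists s : seq ('rV[R]_n * 'rV[R]_n),
    (size s <= m)%N /\ forall x f, norming_pair N P x f -> (x, f) \in s.

Definition sphere N Y : set 'rV[R]_n := [set y | (y <= Y)%MS /\ N y = 1].

Definition dist_to N x (S : set 'rV[R]_n) : R := inf [set N (x - z) | z in S].

Definition hdist N Y Z : R :=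
  Num.max (sup [set dist_to N y (sphere N Z) | y in sphere N Y])
          (sup [set dist_to N z (sphere N Y) | z in sphere N Z]).

End Defs.

(* Main.v *)
Require Import Defs.
Set Warnings "-notation-overridden,-ambiguous-paths,-notation-incompatible-prefix".
Require Import Defs.
From HB Require Import structures.
From mathcomp Require Import all_boot all_order all_algebra.
From mathcomp Require Import boolp classical_sets reals topology normedtype.
From mathcomp Require Import ring lra.
Import Order.TTheory GRing.Theory Num.Theory.
Local Open Scope ring_scope.
Set Implicit Arguments. Unset Strict Implicit. Unset Printing Implicit Defensive.
Local Open Scope classical_set_scope.
Import numFieldTopology.Exports numFieldNormedType.Exports.
Section Basics.
Variables (R : realType) (n : nat) (N : 'rV[R]_n -> R).
Hypothesis HN : is_norm N.

Lemma N0 : N 0 = 0.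
Proof. by case: HN => _ HZ _; rewrite -(scale0r 0) HZ normr0 mul0r. Qed.

Lemma NZ a x : N (a *: x) = `|a| * N x.
Proof. by case: HN. Qed.

Lemma NT x y : N (x + y) <= N x + N y.
Proof. by case: HN. Qed.

Lemma NN x : N (- x) = N x.
Proof. by rewrite -scaleN1r NZ normrN normr1 mul1r. Qed.

Lemma N_ge0 x : 0 <= N x.
Proof.
have := NT x (- x); rewrite subrr N0 NN => h.
by rewrite -(@pmulr_rge0 _ 2) // mulr2n mulrDl mul1r.
Qed.

Lemma N_eq0 x : N x = 0 -> x = 0.
Proof. by case: HN => h _ _; exact: h. Qed.

Lemma NB x y : N (x - y) <= N x + N y.
Proof. by rewrite -(NN y) NT. Qed.

Lemma N_sub_ge x y : N x - N y <= N (x - y).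
Proof. by rewrite lerBlDr; have := NT (x - y) y; rewrite subrK. Qed.

Lemma N_sum (I : Type) (r : seq I) (P : pred I) (F : I -> 'rV[R]_n) :
  N (\sum_(i <- r | P i) F i) <= \sum_(i <- r | P i) N (F i).
Proof.
apply: (big_ind2 (fun a b => N a <= b)); first by rewrite N0.
  by move=> a b c d h1 h2; apply: le_trans (NT _ _) _; exact: lerD.
by [].
Qed.

End Basics.

Section SupInf.
Variable R : realType.
Implicit Types E : set R.

Lemma le_sup_mem E x b : (forall y, E y -> y <= b) -> E x -> x <= sup E.
Proof. by move=> ub Ex; apply: ub_le_sup => //; exists b. Qed.

Lemma sup_le E b : E !=set0 -> (forall y, E y -> y <= b) -> sup E <= b.
Proof. by move=> ne ub; apply: ge_sup. Qed.

Lemma inf_le_mem E x b : (forall y, E y -> b <= y) -> E x -> inf E <= x.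
Proof. by move=> lb Ex; apply: ge_inf => //; exists b. Qed.

Lemma le_inf E b : E !=set0 -> (forall y, E y -> b <= y) -> b <= inf E.
Proof. by move=> ne lb; apply: lb_le_inf. Qed.

End SupInf.
Section Equiv.
Variables (R : realType) (n : nat).
Implicit Types (u v x f g : 'rV[R]_n) (D : 'M[R]_n).

Definition nrm (v : 'rV[R]_n) : R := \sum_i `|v 0 i|.
Definition mb (D : 'M[R]_n) : R := \sum_i \sum_j `|D i j|.

Lemma nrm_ge0 v : 0 <= nrm v.
Proof. by apply: sumr_ge0 => i _. Qed.

Lemma mb_ge0 D : 0 <= mb D.
Proof. by apply: sumr_ge0 => i _; apply: sumr_ge0. Qed.

Lemma coord_le_nrm v i : `|v 0 i| <= nrm v.
Proof.
rewrite /nrm (bigD1 i) //= lerDl; by apply: sumr_ge0.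
Qed.

Lemma entry_le_mb D i j : `|D i j| <= mb D.
Proof.
rewrite /mb (bigD1 i) //= (bigD1 j) //= -addrA lerDl.
by apply: addr_ge0; apply: sumr_ge0 => // k _; apply: sumr_ge0.
Qed.

Lemma row_le_mb D i : \sum_j `|D i j| <= mb D.
Proof.
rewrite /mb [leRHS](bigD1 i) //= lerDl.
by apply: sumr_ge0 => k _; apply: sumr_ge0.
Qed.

Lemma nrmD u v : nrm (u + v) <= nrm u + nrm v.
Proof.
rewrite /nrm -big_split /=; apply: ler_sum => i _; rewrite mxE; exact: ler_normD.
Qed.

Lemma nrmZ a v : nrm (a *: v) = `|a| * nrm v.
Proof. by rewrite /nrm mulr_sumr; apply: eq_bigr => i _; rewrite mxE normrM. Qed.

Lemma nrm0 : nrm 0 = 0.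
Proof. by rewrite /nrm big1 // => i _; rewrite mxE normr0. Qed.

Lemma nrm_sum (I : Type) (r : seq I) (P : pred I) (F : I -> 'rV[R]_n) :
  nrm (\sum_(i <- r | P i) F i) <= \sum_(i <- r | P i) nrm (F i).
Proof.
apply: (big_ind2 (fun a b => nrm a <= b)); first by rewrite nrm0.
  by move=> a b c d h1 h2; apply: le_trans (nrmD _ _) _; exact: lerD.
by [].
Qed.

Lemma nrm_mul (x : 'rV[R]_n) D : nrm (x *m D) <= nrm x * mb D.
Proof.
rewrite /nrm.
apply: (@le_trans _ _ (\sum_j \sum_i `|x 0 i| * `|D i j|)).
  apply: ler_sum => j _; rewrite mxE.
  by apply: le_trans (ler_norm_sum _ _ _) _; apply: ler_sum => i _; rewrite normrM.
rewrite exchange_big /= mulr_suml; apply: ler_sum => i _.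
rewrite -mulr_sumr; apply: ler_wpM2l => //; exact: row_le_mb.
Qed.

Definition pairing_sum (f x : 'rV[R]_n) : pairing f x = \sum_j x 0 j * f 0 j.
Proof. by rewrite /pairing mxE; apply: eq_bigr => j _; rewrite mxE. Qed.

Lemma pairing_le f x : `|pairing f x| <= nrm x * nrm f.
Proof.
rewrite pairing_sum /nrm mulr_suml.
apply: le_trans (ler_norm_sum _ _ _) _; apply: ler_sum => j _.
by rewrite normrM ler_wpM2l // coord_le_nrm.
Qed.

Lemma pairingDr f x y : pairing f (x + y) = pairing f x + pairing f y.
Proof. by rewrite !pairing_sum -big_split; apply: eq_bigr => j _; rewrite mxE mulrDl. Qed.

Lemma pairingZr f a x : pairing f (a *: x) = a * pairing f x.
Proof. by rewrite !pairing_sum mulr_sumr; apply: eq_bigr => j _; rewrite mxE mulrA. Qed.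

Lemma pairingBl f g x : pairing (f - g) x = pairing f x - pairing g x.
Proof. by rewrite !pairing_sum -sumrB; apply: eq_bigr => j _; rewrite !mxE mulrBr. Qed.

Lemma pairingDl f g x : pairing (f + g) x = pairing f x + pairing g x.
Proof. by rewrite !pairing_sum -big_split; apply: eq_bigr => j _; rewrite !mxE mulrDr. Qed.

Lemma pairingZl a f x : pairing (a *: f) x = a * pairing f x.
Proof. by rewrite !pairing_sum mulr_sumr; apply: eq_bigr => j _; rewrite !mxE mulrCA. Qed.

Lemma pairing_sumr f (I : Type) (r : seq I) (P : pred I) (F : I -> 'rV[R]_n) :
  pairing f (\sum_(i <- r | P i) F i) = \sum_(i <- r | P i) pairing f (F i).
Proof.
apply: (big_ind2 (fun a b => pairing f a = b)).
- by rewrite pairing_sum big1 // => j _; rewrite mxE mul0r.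
- by move=> a b c d <- <-; rewrite pairingDr.
- by [].
Qed.

Lemma pairingBr f x y : pairing f (x - y) = pairing f x - pairing f y.
Proof. by rewrite pairingDr -scaleN1r pairingZr mulN1r. Qed.

End Equiv.
Section Poly.
Variables (R : realType) (n : nat) (N : 'rV[R]_n -> R) (s : seq 'rV[R]_n).
Hypothesis HN : is_norm N.
Hypothesis Hs : ball1 N = conv_hull s.
Implicit Types (u v x f g : 'rV[R]_n) (D : 'M[R]_n).

Lemma conv_mem_s (i : 'I_(size s)) : conv_hull s s`_i.
Proof.
exists (fun j => (j == i)%:R); split.
- by move=> j; rewrite ler0n.
- by rewrite (bigD1 i) //= eqxx big1 ?addr0 // => j /negbTE ->.
- rewrite (bigD1 i) //= eqxx scale1r big1 ?addr0 // => j /negbTE ->.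
  by rewrite scale0r.
Qed.

Lemma ball_s (i : 'I_(size s)) : N s`_i <= 1.
Proof. by have := conv_mem_s i; rewrite -Hs. Qed.

Lemma ball_conv x : N x <= 1 -> conv_hull s x.
Proof. by move=> h; rewrite -Hs. Qed.

Lemma conv_ball x : conv_hull s x -> N x <= 1.
Proof. by rewrite -Hs. Qed.

Definition C2 := \sum_(i < size s) nrm s`_i.

Lemma C2_ge0 : 0 <= C2.
Proof. by apply: sumr_ge0 => i _; exact: nrm_ge0. Qed.

Lemma conv_nrm x : conv_hull s x -> nrm x <= C2.
Proof.
move=> [w [w0 w1 ->]].
apply: le_trans (nrm_sum _ _ _) _; apply: ler_sum => i _.
rewrite nrmZ ger0_norm //; apply: ler_piMl; first exact: nrm_ge0.
rewrite -w1 (bigD1 i) //= lerDl; exact: sumr_ge0.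
Qed.

Lemma nrm_le_N v : nrm v <= C2 * N v.
Proof.
have [nv0|nv0] := eqVneq (N v) 0.
  by rewrite nv0 (N_eq0 HN nv0) nrm0 mulr0.
have Npos : 0 < N v by rewrite lt_def nv0 N_ge0.
have := conv_nrm (ball_conv (x := (N v)^-1 *: v) _).
rewrite nrmZ NZ // ger0_norm ?invr_ge0 ?N_ge0 // mulVf // => /(_ (lexx _)).
by rewrite -(ler_pM2l Npos) mulrA mulfV // mul1r mulrC.
Qed.

Definition C1 := \sum_(j < n) N (delta_mx 0 j).

Lemma C1_ge0 : 0 <= C1.
Proof. by apply: sumr_ge0 => i _; exact: N_ge0. Qed.

Lemma N_le_nrm v : N v <= C1 * nrm v.
Proof.
rewrite {1}(row_sum_delta v).
apply: le_trans (N_sum HN _ _ _) _.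
rewrite /C1 mulr_suml; apply: ler_sum => j _.
by rewrite NZ // mulrC ler_wpM2l ?N_ge0 // coord_le_nrm.
Qed.

Definition K0 := C1 * C2.

Lemma K0_ge0 : 0 <= K0.
Proof. exact: mulr_ge0 C1_ge0 C2_ge0. Qed.

Lemma N_mul x D : N (x *m D) <= K0 * mb D * N x.
Proof.
apply: le_trans (N_le_nrm _) _.
apply: le_trans (ler_wpM2l C1_ge0 (nrm_mul x D)) _.
have -> : K0 * mb D * N x = C1 * ((C2 * N x) * mb D) by rewrite /K0; ring.
by rewrite ler_wpM2l ?C1_ge0 // ler_wpM2r ?mb_ge0 // nrm_le_N.
Qed.

End Poly.
Section OpNorm.
Variables (R : realType) (n : nat) (N : 'rV[R]_n -> R) (s : seq 'rV[R]_n).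
Hypothesis HN : is_norm N.
Hypothesis Hs : ball1 N = conv_hull s.
Implicit Types (u v x f g : 'rV[R]_n) (D P Q : 'M[R]_n).

Let K := K0 N s.

Lemma K_ge0 : 0 <= K.
Proof. exact: K0_ge0. Qed.

Lemma Nmul x D : N (x *m D) <= K * mb D * N x.
Proof. exact: N_mul. Qed.

Lemma opS_ub P y : [set N (x *m P) | x in ball1 N] y -> y <= K * mb P.
Proof.
move=> [x Bx <-]; apply: le_trans (Nmul _ _) _.
apply: ler_piMr => //; exact: mulr_ge0 K_ge0 (mb_ge0 _).
Qed.

Lemma opS0 P : [set N (x *m P) | x in ball1 N] 0.
Proof. by exists 0; rewrite /ball1 /= ?N0 // mul0mx N0. Qed.

Lemma op_ge0 P : 0 <= op_norm N P.
Proof. exact: (le_sup_mem (@opS_ub P) (opS0 P)). Qed.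

Lemma op_le x P : N (x *m P) <= op_norm N P * N x.
Proof.
have [nv0|nv0] := eqVneq (N x) 0.
  by rewrite (N_eq0 HN nv0) mul0mx N0 // mulr0.
have Npos : 0 < N x by rewrite lt_def nv0 N_ge0.
have : [set N (x *m P) | x in ball1 N] (N ((N x)^-1 *: x *m P)).
  exists ((N x)^-1 *: x) => //.
  by rewrite /ball1 /= NZ // ger0_norm ?invr_ge0 ?N_ge0 // mulVf.
move=> /(le_sup_mem (@opS_ub P)).
rewrite -scalemxAl NZ // ger0_norm ?invr_ge0 ?N_ge0 //.
by rewrite -(ler_pM2l Npos) mulrA mulfV // mul1r mulrC.
Qed.

Lemma op_le_c P c : 0 <= c -> (forall x, N (x *m P) <= c * N x) -> op_norm N P <= c.
Proof.
move=> c0 h; apply: sup_le; first by exists 0; exact: opS0.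
move=> y [x Bx <-]; apply: le_trans (h x) _.
by apply: ler_piMr.
Qed.

Lemma op_diff P Q : op_norm N P <= op_norm N Q + K * mb (P - Q).
Proof.
apply: op_le_c.
  by apply: addr_ge0; [exact: op_ge0 | exact: mulr_ge0 K_ge0 (mb_ge0 _)].
move=> x; have -> : x *m P = x *m Q + x *m (P - Q) by rewrite mulmxBr addrC subrK.
apply: le_trans (NT HN _ _) _; rewrite mulrDl; apply: lerD; first exact: op_le.
exact: Nmul.
Qed.

Lemma op_mb P : op_norm N P <= K * mb P.
Proof.
apply: op_le_c; first exact: mulr_ge0 K_ge0 (mb_ge0 _).
by move=> x; exact: Nmul.
Qed.

End OpNorm.
Section ProjConst.
Variables (R : realType) (n : nat) (N : 'rV[R]_n -> R) (s : seq 'rV[R]_n).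
Hypothesis HN : is_norm N.
Hypothesis Hs : ball1 N = conv_hull s.
Implicit Types (u v x y w f g : 'rV[R]_n) (D P Q Y Z : 'M[R]_n).

Lemma proj_in Y P x : is_proj Y P -> (x *m P <= Y)%MS.
Proof. by case=> hP _; exact: submx_trans (submxMl x P) hP. Qed.

Lemma proj_id Y P y : is_proj Y P -> (y <= Y)%MS -> y *m P = y.
Proof. by case=> _ h; exact: h. Qed.

Lemma proj_exists Y : is_proj Y (proj_mx Y (Y^C)%MS).
Proof.
split; first by have := proj_mx_sub Y (Y^C)%MS 1%:M; rewrite mul1mx.
by move=> y hy; apply: proj_mx_id => //; exact: capmx_compl.
Qed.

Lemma pc_le Y P : is_proj Y P -> proj_const N Y <= op_norm N P.
Proof.
move=> hP; apply: (inf_le_mem (b:=0)); last by exists P.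
by move=> y [Q _ <-]; have := op_ge0 HN Hs Q.
Qed.

Lemma pc_ge0 Y : 0 <= proj_const N Y.
Proof.
apply: le_inf; first by exists (op_norm N (proj_mx Y (Y^C)%MS)), (proj_mx Y (Y^C)%MS) => //; exact: proj_exists.
by move=> y [Q _ <-]; have := op_ge0 HN Hs Q.
Qed.

Lemma pc_approx Y e : 0 < e -> exists Q, is_proj Y Q /\ op_norm N Q < proj_const N Y + e.
Proof.
move=> e0.
have := @inf_lt _ [set op_norm N P | P in is_proj Y] (proj_const N Y + e).
case.
- by exists (op_norm N (proj_mx Y (Y^C)%MS)), (proj_mx Y (Y^C)%MS) => //; exact: proj_exists.
- by rewrite ltrDl.
by move=> y [Q hQ <-] h; exists Q.
Qed.

Lemma proj_rank Y Q : is_proj Y Q -> \rank Q = \rank Y.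
Proof.
move=> hQ; apply/eqP; rewrite eqn_leq; apply/andP; split.
  by apply: mxrankS; case: hQ.
have -> : Y = Y *m Q.
  by apply/row_matrixP => i; rewrite row_mul (proj_id hQ) // row_sub.
exact: mxrankM_maxr.
Qed.

Lemma lambda_upper Y Z Q th :
  \rank Y = \rank Z -> is_proj Y Q -> 0 <= th -> th < 1 ->
  (forall u, (u <= Z)%MS -> N (u *m Q - u) <= th * N u) ->
  proj_const N Z <= op_norm N Q / (1 - th).
Proof.
move=> rYZ hQ th0 th1 hth.
have th1' : 0 < 1 - th by rewrite subr_gt0.
set V := kermx Q.
have cap : (Z :&: V)%MS = 0.
  apply/eqP/rowV0P => v; rewrite sub_capmx => /andP[vZ /sub_kermxP vV].
  have := hth v vZ; rewrite vV sub0r NN // => h.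
  apply: (N_eq0 HN); apply/eqP; rewrite eq_le N_ge0 // andbT.
  have : (1 - th) * N v <= 0 by rewrite mulrBl mul1r subr_le0.
  by rewrite pmulr_rle0.
have full : row_full (Z + V)%MS.
  rewrite -col_leq_rank mxrank_disjoint_sum // mxrank_ker (proj_rank hQ) rYZ.
  by rewrite subnKC // rank_leq_col.
set Qz := proj_mx Z V.
have hQz : is_proj Z Qz.
  split; first by have := proj_mx_sub Z V 1%:M; rewrite mul1mx.
  by move=> y hy; apply: proj_mx_id.
apply: le_trans (pc_le hQz) _.
apply: (op_le_c HN) => //; first by apply: divr_ge0; [have := op_ge0 HN Hs Q | exact: ltW].
move=> x; set u := x *m Qz.
have uZ : (u <= Z)%MS by exact: proj_mx_sub.
have xuV : (x - u <= V)%MS by apply: proj_mx_compl_sub; exact: submx_full.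
have xQ : x *m Q = u *m Q.
  by move/sub_kermxP: xuV; rewrite mulmxBl => /eqP; rewrite subr_eq0 => /eqP.
have h1 : N u <= op_norm N Q * N x + th * N u.
  have e : u = u *m Q - (u *m Q - u) by rewrite opprB addrC subrK.
  rewrite {1}e; apply: le_trans (NB HN _ _) _; apply: lerD; first by rewrite -xQ; exact: (op_le HN Hs).
  exact: hth.
rewrite mulrAC ler_pdivlMr //.
by rewrite mulrBr mulr1 lerBlDr [N u * th]mulrC.
Qed.

End ProjConst.
Section Hdist.
Variables (R : realType) (n : nat) (N : 'rV[R]_n -> R).
Hypothesis HN : is_norm N.
Implicit Types (u v x y w z f g : 'rV[R]_n) (D P Q Y Z : 'M[R]_n).

Lemma sphere_ne Y : (0 < \rank Y)%N -> sphere N Y !=set0.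
Proof.
move=> rk; have : Y != 0 by apply: contraTneq rk => ->; rewrite mxrank0.
case/rowV0Pn => v vY vn0.
have Nv : N v != 0 by apply: contra vn0 => /eqP /(N_eq0 HN) ->.
exists ((N v)^-1 *: v); split; first exact: scalemx_sub.
by rewrite NZ // ger0_norm ?invr_ge0 ?N_ge0 // mulVf.
Qed.

Lemma dist_le y S z : S z -> dist_to N y S <= N (y - z).
Proof.
move=> Sz; apply: (inf_le_mem (b := 0)); last by exists z.
by move=> r [z' _ <-]; exact: N_ge0.
Qed.

Lemma approx1 Y Z d d' u :
  sup [set dist_to N y (sphere N Z) | y in sphere N Y] <= d -> d < d' ->
  sphere N Z !=set0 -> (u <= Y)%MS ->
  exists w, (w <= Z)%MS /\ N (u - w) <= d' * N u.
Proof.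
move=> hs dd' [z0 [z0Z Nz0]] uY.
have [u0|un0] := eqVneq u 0.
  by exists 0; rewrite sub0mx u0 subr0 N0 // mulr0 lexx.
have Nu : N u != 0 by apply: contra un0 => /eqP /(N_eq0 HN) ->.
have Nu0 : 0 < N u by rewrite lt_def Nu N_ge0.
set y := (N u)^-1 *: u.
have yS : sphere N Y y.
  split; first exact: scalemx_sub.
  by rewrite NZ // ger0_norm ?invr_ge0 ?N_ge0 // mulVf.
have hy : dist_to N y (sphere N Z) < d'.
  apply: le_lt_trans _ dd'; apply: le_trans hs.
  apply: (le_sup_mem (b := 2)); last by exists y.
  move=> r [y' [_ Ny'] <-]; apply: le_trans (dist_le y' (conj z0Z Nz0)) _.
  by apply: le_trans (NB HN _ _) _; rewrite Ny' Nz0.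
have [r [z [zZ Nz] <-] hr] := inf_lt (ex_intro _ _ (ex_intro2 _ _ z0 (conj z0Z Nz0) erefl)) hy.
exists (N u *: z); split; first exact: scalemx_sub.
have -> : u - N u *: z = N u *: (y - z).
  by rewrite scalerBr /y scalerA mulfV // scale1r.
by rewrite NZ // ger0_norm ?N_ge0 // mulrC ler_wpM2r ?N_ge0 // ltW.
Qed.

Lemma approx_hd Y Z d d' :
  hdist N Y Z <= d -> d < d' -> (0 < \rank Y)%N -> (0 < \rank Z)%N ->
  (forall u, (u <= Y)%MS -> exists w, (w <= Z)%MS /\ N (u - w) <= d' * N u) /\
  (forall u, (u <= Z)%MS -> exists w, (w <= Y)%MS /\ N (u - w) <= d' * N u).
Proof.
rewrite /hdist /Num.max => hd dd' rY rZ.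
have [h1 h2] : sup [set dist_to N y (sphere N Z) | y in sphere N Y] <= d /\
               sup [set dist_to N y (sphere N Y) | y in sphere N Z] <= d.
  by move: hd; case: ifP => h hd; split => //; [apply: le_trans (ltW h) hd|apply: le_trans _ hd; rewrite leNgt h].
split => u hu.
  exact: approx1 h1 dd' (sphere_ne rZ) hu.
exact: approx1 h2 dd' (sphere_ne rY) hu.
Qed.

End Hdist.
Section Extreme.
Variables (R : realType) (n : nat) (N : 'rV[R]_n -> R) (s : seq 'rV[R]_n).
Hypothesis HN : is_norm N.
Hypothesis Hs : ball1 N = conv_hull s.
Implicit Types (u v x y w z f g d : 'rV[R]_n) (D P Q Y Z : 'M[R]_n).

Lemma ext_ball_in x : extreme (ball1 N) x -> x \in s.
Proof.
move=> [Bx hx]; move: (Bx); rewrite Hs => -[w [w0 w1 xE]].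
have [i wi] : exists i, 0 < w i.
  apply/not_existsP => hn; move: w1; rewrite big1 => [/esym/eqP|j _]; first by rewrite oner_eq0.
  by apply/eqP; rewrite eq_le w0 andbT leNgt; apply/negP => h; apply: (hn j).
have sin : s`_i \in s by rewrite mem_nth.
have hsum : w i + \sum_(j | j != i) w j = 1 by rewrite -w1 [RHS](bigD1 i).
have xsum : x = w i *: s`_i + \sum_(j | j != i) w j *: s`_(val j) by rewrite xE [LHS](bigD1 i).
have [wi1|wi1] := eqVneq (w i) 1.
  have S0 : \sum_(j | j != i) w j = 0.
    by apply: (@addrI _ 1); rewrite addr0 -{1}wi1 hsum.
  have h0 j : j != i -> w j = 0 by move=> hj; exact: (psumr_eq0P (fun k _ => w0 k) S0 hj).
  rewrite xsum wi1 scale1r big1 ?addr0 // => j /h0 ->; by rewrite scale0r.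
have wi1' : w i < 1.
  rewrite lt_def eq_sym wi1 /= -hsum lerDl; exact: sumr_ge0.
have t1 : 0 < 1 - w i by rewrite subr_gt0.
set z := \sum_(j | j != i) (w j / (1 - w i)) *: s`_(val j).
have zc : conv_hull s z.
  exists (fun j => (j != i)%:R * (w j / (1 - w i))); split.
  - by move=> j; apply: mulr_ge0 => //; apply: divr_ge0 => //; exact: ltW.
  - rewrite (bigD1 i) //= eqxx mul0r add0r.
    rewrite (eq_bigr (fun j => w j / (1 - w i))); last by move=> j ->; rewrite mul1r.
    have S1 : \sum_(j | j != i) w j = 1 - w i by rewrite -hsum [w i + _]addrC addrK.
    by rewrite -mulr_suml S1 mulfV // gt_eqF.
  - rewrite /z [RHS](bigD1 i) //= eqxx mul0r scale0r add0r.
    by apply: eq_bigr => j ->; rewrite mul1r.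
have xE2 : x = w i *: s`_i + (1 - w i) *: z.
  rewrite xsum /z scaler_sumr; congr (_ + _); apply: eq_bigr => j _.
  by rewrite scalerA mulrCA mulfV ?gt_eqF // mulr1.
have Bs : ball1 N s`_i by rewrite Hs; exact: conv_mem_s.
have Bz : ball1 N z by rewrite Hs.
have [<- _] := hx _ _ (w i) Bs Bz (introT andP (conj wi wi1')) xE2.
exact: sin.
Qed.

Lemma pairing_conv f x : conv_hull s x ->
  exists w : 'I_(size s) -> R, [/\ forall i, 0 <= w i, \sum_i w i = 1 &
     pairing f x = \sum_i w i * pairing f s`_i].
Proof.
move=> [w [w0 w1 ->]]; exists w; split => //.
by rewrite pairing_sumr; apply: eq_bigr => i _; rewrite pairingZr.
Qed.

Lemma dual_char f : dual_ball1 N f <-> forall i : 'I_(size s), pairing f s`_i <= 1.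
Proof.
have ub : forall r, [set pairing f x | x in ball1 N] r -> r <= C2 s * nrm f.
  move=> r [x Bx <-]; apply: le_trans (ler_norm _) _; apply: le_trans (pairing_le _ _) _.
  by apply: ler_wpM2r; [exact: nrm_ge0| apply: conv_nrm; rewrite -Hs].
split.
  move=> hd i; apply: le_trans hd; apply: (le_sup_mem ub).
  by exists s`_i => //; rewrite Hs; exact: conv_mem_s.
move=> h; apply: sup_le.
  exists 0, 0; [by rewrite /ball1 /= N0 // ler01 | by rewrite /pairing mul0mx mxE].
move=> r [x Bx <-]; move: Bx; rewrite Hs => /(pairing_conv f) [w [w0 w1 ->]].
rewrite -w1; apply: ler_sum => i _; rewrite -{2}(mulr1 (w i)).
exact: ler_wpM2l.
Qed.

Lemma dual_rigid f d : extreme (dual_ball1 N) f ->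
  (forall i : 'I_(size s), pairing f s`_i = 1 -> pairing d s`_i = 0) -> d = 0.
Proof.
move=> [Bf hf] hd.
have hf1 := (dual_char f).1 Bf.
set e := \big[Num.min/1]_(i : 'I_(size s) | pairing f s`_i != 1) ((1 - pairing f s`_i) / (`|pairing d s`_i| + 1)).
have e0 : 0 < e.
  rewrite /e; elim/big_ind: _ => //.
    by move=> a b a0 b0; rewrite lt_min a0 b0.
  move=> i hi; apply: divr_gt0; last by apply: ltr_pwDr => //.
  by rewrite subr_gt0 lt_def eq_sym hi hf1.
have key : forall i : 'I_(size s), pairing f s`_i + e * `|pairing d s`_i| <= 1.
  move=> i; have [h1|h1] := eqVneq (pairing f s`_i) 1.
    by rewrite h1 hd // normr0 mulr0 addr0.
  have : e <= (1 - pairing f s`_i) / (`|pairing d s`_i| + 1).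
    by rewrite /e; apply: bigmin_le_cond.
  rewrite ler_pdivlMr; last by apply: ltr_pwDr.
  move=> h; rewrite -lerBrDl; apply: le_trans h; rewrite mulrDr mulr1 lerDl; exact: ltW.
have Bp : dual_ball1 N (f + e *: d).
  apply/(dual_char _).2 => i; rewrite pairingDl pairingZl; apply: le_trans (key i).
  by rewrite lerD2l ler_wpM2l ?(ltW e0) ?ler_norm.
have Bm : dual_ball1 N (f - e *: d).
  apply/(dual_char _).2 => i; rewrite pairingBl pairingZl; apply: le_trans (key i).
  by rewrite lerD2l -mulrN ler_wpM2l ?(ltW e0) // -normrN ler_norm.
have h2 : 0 < (2^-1 : R) < 1 by rewrite invr_gt0 invf_lt1 ?ltr1n ?ltr0n.
have fE : f = 2^-1 *: (f + e *: d) + (1 - 2^-1) *: (f - e *: d).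
  have -> : 1 - 2^-1 = 2^-1 :> R by rewrite {1}(splitr 1) mul1r addrK.
  by apply/rowP => j; rewrite !mxE; field.
have [hp _] := hf _ _ _ Bp Bm h2 fE.
have : e *: d = 0 by rewrite -(addKr f (e *: d)) hp addNr.
move/eqP; rewrite scaler_eq0 => /orP[/eqP e00|/eqP //].
by move: e0; rewrite e00 ltxx.
Qed.

Definition codeT := ('I_(size s).+1 * {set 'I_(size s)})%type.

Definition code x f : codeT := (inord (index x s), finset (fun i : 'I_(size s) => pairing f s`_i == 1)).

Lemma code_inj x f x' f' :
  extreme (ball1 N) x -> extreme (dual_ball1 N) f ->
  extreme (ball1 N) x' -> extreme (dual_ball1 N) f' ->
  code x f = code x' f' -> x = x' /\ f = f'.
Proof.
move=> ex ef ex' ef' [hi hS]; split.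
  have xs := ext_ball_in ex; have xs' := ext_ball_in ex'.
  move: (congr1 (@nat_of_ord _) hi); rewrite !inordK; last 2 first.
  - by rewrite ltnS index_size.
  - by rewrite ltnS index_size.
  by move=> hi2; rewrite -(nth_index 0 xs) hi2 nth_index.
apply/eqP; rewrite -subr_eq0; apply/eqP; apply: (dual_rigid ef) => i hi'.
have : i \in finset (fun i : 'I_(size s) => pairing f s`_i == 1) by rewrite inE hi'.
rewrite hS inE => /eqP h'.
by rewrite pairingBl hi' h' subrr.
Qed.

End Extreme.
Section Codes.
Variables (R : realType) (n : nat) (N : 'rV[R]_n -> R) (s : seq 'rV[R]_n).
Hypothesis HN : is_norm N.
Hypothesis Hs : ball1 N = conv_hull s.
Implicit Types (u v x y w z f g d : 'rV[R]_n) (D P Q Y Z : 'M[R]_n).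

Definition NP P : {set codeT s} :=
  finset (fun t => `[< exists x f, norming_pair N P x f /\ code s x f = t >]).

Lemma NP_at_most P m : at_most_norming N P m -> (#|NP P| <= m)%N.
Proof.
move=> [l [hl hin]].
apply: (leq_trans _ hl).
apply: (@leq_trans #|[pred t | t \in [seq code s p.1 p.2 | p <- l]]|); last first.
  by apply: leq_trans (card_size _) _; rewrite size_map.
apply: subset_leq_card; apply/fintype.subsetP => t; rewrite inE => /asboolP [x [f [hn <-]]].
by rewrite inE; apply/mapP; exists (x, f) => //; exact: hin.
Qed.

Lemma NP_mem P x f : norming_pair N P x f -> code s x f \in NP P.
Proof. by move=> h; rewrite inE; apply/asboolP; exists x, f. Qed.

Lemma NP_inv P t : t \in NP P -> exists x f, norming_pair N P x f /\ code s x f = t.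
Proof. by rewrite inE => /asboolP. Qed.

Lemma norming_uniq P P' x f x' f' :
  norming_pair N P x f -> norming_pair N P' x' f' -> code s x f = code s x' f' ->
  x = x' /\ f = f'.
Proof.
by move=> [ex ef _] [ex' ef' _]; apply: (code_inj HN Hs ex ef ex' ef').
Qed.

Lemma at_most_NP P m : (#|NP P| <= m)%N -> at_most_norming N P m.
Proof.
move=> hc.
pose dec t := xget (0, 0) [set p : 'rV[R]_n * 'rV[R]_n | norming_pair N P p.1 p.2 /\ code s p.1 p.2 = t].
exists [seq dec t | t <- enum (NP P)]; split.
  by rewrite size_map -cardE.
move=> x f hn; apply/mapP; exists (code s x f); first by rewrite mem_enum; exact: NP_mem.
have : [set p : 'rV[R]_n * 'rV[R]_n | norming_pair N P p.1 p.2 /\ code s p.1 p.2 = code s x f] (dec (code s x f)).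
  by apply: xgetPex; exists (x, f).
case: (dec _) => x' f' [hn' hc'].
by have [-> ->] := norming_uniq hn hn' (esym hc').
Qed.

End Codes.
Lemma eqle (R : numDomainType) (x y : R) : x = y -> x <= y.
Proof. by move=> ->. Qed.

Lemma tele2 (V : zmodType) (a b c : V) : a - c = (a - b) + (b - c).
Proof. by rewrite addrA subrK. Qed.
Lemma tele3 (V : zmodType) (a b c d : V) : a - d = (a - b) + (b - c) + (c - d).
Proof. by rewrite -tele2 -tele2. Qed.

Lemma le0_eps (R : realType) (a b c : R) : 0 <= b -> 0 < c ->
  (forall e, 0 < e -> e <= c -> a <= e * b) -> a <= 0.
Proof.
move=> b0 c0 h; rewrite leNgt; apply/negP => a0.
have b1 : 0 < b + 1 by apply: ltr_pwDr.
set e := Num.min c (a / (b + 1)).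
have e0 : 0 < e by rewrite lt_min c0 divr_gt0.
have ec : e <= c by rewrite ge_min lexx.
have := h e e0 ec.
have h1 : e * b <= a / (b + 1) * b by rewrite ler_wpM2r // ge_min lexx orbT.
have h2 : a / (b + 1) * b < a.
  by rewrite mulrAC ltr_pdivrMr // ltr_pM2l // ltrDl ltr01.
move=> h3; have := le_lt_trans (le_trans h3 h1) h2; by rewrite ltxx.
Qed.

Lemma eq0_eps (R : realType) (n : nat) (N : 'rV[R]_n -> R) (v : 'rV[R]_n) (b c : R) :
  is_norm N -> 0 <= b -> 0 < c ->
  (forall e, 0 < e -> e <= c -> N v <= e * b) -> v = 0.
Proof.
move=> HN b0 c0 h; apply: (N_eq0 HN); apply/eqP; rewrite eq_le N_ge0 // andbT.
exact: le0_eps b0 c0 h.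
Qed.

Lemma inv_half (R : realType) (q t : R) : 0 <= q -> 0 <= t -> t <= 2^-1 ->
  q / (1 - t) <= q + 2 * q * t.
Proof.
move=> q0 t0 th.
have t1 : 0 < 1 - t.
  rewrite subr_gt0; apply: le_lt_trans th _; rewrite invf_lt1 ?ltr1n ?ltr0n //.
rewrite ler_pdivrMr //.
have : 0 <= q * t * (1 - 2 * t).
  apply: mulr_ge0; first exact: mulr_ge0.
  rewrite subr_ge0 -(ler_pM2l (_ : 0 < 2^-1)) ?invr_gt0 ?ltr0n // mulrA mulVf ?pnatr_eq0 //.
  by rewrite mul1r mulr1.
move=> h; have e : (q + 2 * q * t) * (1 - t) = q + q * t * (1 - 2 * t) by ring.
by rewrite e lerDl.
Qed.

Section Main.
Variables (R : realType) (n k m : nat) (N : 'rV[R]_n -> R) (Y : 'M[R]_n) (s : seq 'rV[R]_n).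
Hypothesis HN : is_norm N.
Hypothesis Hs : ball1 N = conv_hull s.
Hypothesis k0 : (0 < k)%N.
Hypothesis rY : \rank Y = k.
Hypothesis hyp : forall P, is_min_proj N Y P -> at_most_norming N P m.
Implicit Types (u v x y w z f g d : 'rV[R]_n) (D P Q Z : 'M[R]_n).

Let K := K0 N s.
Let K_ge0 : 0 <= K. Proof. exact: K0_ge0. Qed.

Lemma near_pc (Y0 : 'M[R]_n) Q (d' : R) : \rank Y0 = k -> is_proj Y Q -> 0 <= d' ->
  (op_norm N Q + 1) * d' < 1 ->
  (forall u, (u <= Y0)%MS -> exists w, (w <= Y)%MS /\ N (u - w) <= d' * N u) ->
  proj_const N Y0 <= op_norm N Q / (1 - (op_norm N Q + 1) * d').
Proof.
move=> r0 hQ d0 hth happ.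
have q0 := op_ge0 HN Hs Q.
apply: (lambda_upper HN Hs (Y := Y)) => //.
- by rewrite rY r0.
- by apply: mulr_ge0 => //; apply: addr_ge0.
move=> u uY0; have [w [wY hw]] := happ u uY0.
have -> : u *m Q - u = (u - w) *m Q - (u - w).
  by rewrite mulmxBl (proj_id hQ wY) opprB addrA subrK.
apply: le_trans (NB HN _ _) _.
apply: le_trans (lerD (op_le HN Hs _ _) (lexx _)) _.
rewrite -[X in _ + X]mul1r -mulrDl -mulrA ler_wpM2l //.
by apply: addr_ge0.
Qed.


Section Limit.
Variables (A : {set codeT s}) (Ps : 'M[R]_n) (d0 M0 : R).
Hypothesis d0pos : 0 < d0.
Hypothesis M0pos : 0 <= M0.
Hypothesis famb : forall (dl : R) (Y0 : 'M[R]_n) P, 0 < dl -> dl <= d0 -> \rank Y0 = k ->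
  hdist N Y Y0 <= dl -> is_min_proj N Y0 P -> op_norm N P <= M0.
Hypothesis clus : forall (e dl : R), 0 < e -> 0 < dl -> dl <= d0 ->
  exists Y0 P, [/\ \rank Y0 = k, hdist N Y Y0 <= dl, is_min_proj N Y0 P, NP N s P = A
                 & mb (Ps - P) <= e].

Let clus2 (e : R) : 0 < e -> e <= d0 ->
  exists Y0 P, [/\ \rank Y0 = k, is_min_proj N Y0 P, NP N s P = A, mb (Ps - P) <= e &
     op_norm N P <= M0] /\
     (forall u, (u <= Y)%MS -> exists w, (w <= Y0)%MS /\ N (u - w) <= e * N u) /\
     (forall u, (u <= Y0)%MS -> exists w, (w <= Y)%MS /\ N (u - w) <= e * N u).
Proof.
move=> e0 ed.
have e2 : 0 < e / 2 by rewrite divr_gt0.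
have e2e : e / 2 < e by rewrite ltr_pdivrMr ?ltr0n // ltr_pMr // ltr1n.
have e2d : e / 2 <= d0 by apply: le_trans (ltW e2e) ed.
have [Y0 [P [r0 hd hm hA hmb]]] := clus e0 e2 e2d.
have rY' : (0 < \rank Y)%N by rewrite rY.
have r0' : (0 < \rank Y0)%N by rewrite r0.
have [h1 h2] := approx_hd HN hd e2e rY' r0'.
exists Y0, P; split => //; split => //.
exact: famb e2 e2d r0 hd hm.
Qed.

Lemma Ps_proj : is_proj Y Ps.
Proof.
have Pi := proj_exists Y.
set Pi0 := proj_mx Y (Y^C)%MS in Pi.
have piq := op_ge0 HN Hs Pi0.
have hid : forall y, (y <= Y)%MS -> y *m Ps = y.
  move=> y yY; apply/eqP; rewrite -subr_eq0; apply/eqP.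
  apply: (eq0_eps HN (b := (K + M0 + 1) * N y) _ d0pos).
    by apply: mulr_ge0; [apply: addr_ge0 => //; apply: addr_ge0 | exact: N_ge0].
  move=> e e0 ed; have [Y0 [P [[r0 hm hA hmb hop] [h1 h2]]]] := clus2 e0 ed.
  have [z [zY0 hz]] := h1 y yY.
  have hzP : z *m P = z by apply: (proj_id hm.1).
  have -> : y *m Ps - y = y *m (Ps - P) + (y - z) *m P + (z - y).
    by rewrite mulmxBr mulmxBl hzP -tele3.
  apply: le_trans (NT HN _ _) _; apply: le_trans (lerD (NT HN _ _) (lexx _)) _.
  have a1 : N (y *m (Ps - P)) <= K * e * N y.
    apply: le_trans (N_mul HN Hs _ _) _; rewrite ler_wpM2r ?N_ge0 // ler_wpM2l //.
  have a2 : N ((y - z) *m P) <= M0 * e * N y.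
    apply: le_trans (op_le HN Hs _ _) _; rewrite -mulrA.
    apply: ler_pM => //; [exact: op_ge0 HN Hs P | exact: N_ge0].
  have a3 : N (z - y) <= e * N y by rewrite -NN // opprB.
  have := lerD (lerD a1 a2) a3.
  by move/le_trans; apply; apply: eqle; ring.
split; last exact: hid.
apply/row_subP => i; rewrite rowE.
set v := delta_mx 0 i *m Ps.
suff -> : v = v *m Pi0 by exact: proj_mx_sub.
apply/eqP; rewrite -subr_eq0; apply/eqP.
set x := delta_mx 0 i : 'rV[R]_n.
apply: (eq0_eps HN (b := (1 + op_norm N Pi0) * ((K + M0) * N x)) _ d0pos).
  apply: mulr_ge0; first exact: addr_ge0.
  by apply: mulr_ge0; [exact: addr_ge0 | exact: N_ge0].
move=> e e0 ed; have [Y0 [P [[r0 hm hA hmb hop] [h1 h2]]]] := clus2 e0 ed.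
have uY0 : (x *m P <= Y0)%MS by apply: proj_in; exact: hm.1.
have [w [wY hw]] := h2 _ uY0.
have hwPi : w *m Pi0 = w by apply: proj_mx_id => //; exact: capmx_compl.
have -> : v - v *m Pi0 = (v - w) - (v - w) *m Pi0.
  by rewrite mulmxBl hwPi opprB -tele2.
apply: le_trans (NB HN _ _) _.
apply: le_trans (lerD (lexx _) (op_le HN Hs _ _)) _.
have hvw : N (v - w) <= (K + M0) * N x * e.
  have -> : v - w = x *m (Ps - P) + (x *m P - w) by rewrite mulmxBr -tele2.
  apply: le_trans (NT HN _ _) _.
  have a1 : N (x *m (Ps - P)) <= K * e * N x.
    apply: le_trans (N_mul HN Hs _ _) _; rewrite ler_wpM2r ?N_ge0 // ler_wpM2l //.
  have a2 : N (x *m P - w) <= e * (M0 * N x).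
    apply: le_trans hw _; rewrite ler_wpM2l ?(ltW e0) //.
    apply: le_trans (op_le HN Hs _ _) _; rewrite ler_wpM2r ?N_ge0 //.
  have := lerD a1 a2.
  by move/le_trans; apply; apply: eqle; ring.
rewrite -{1}(mul1r (N (v - w))) -mulrDl.
apply: le_trans (ler_wpM2l (addr_ge0 ler01 piq) hvw) _.
by apply: eqle; ring.
Qed.

Lemma Ps_op : op_norm N Ps <= proj_const N Y.
Proof.
apply/ler_addgt0Pr => eta eta0.
have [Q [hQ hQ']] := pc_approx N Y eta0.
set q := op_norm N Q in hQ'.
have q0 : 0 <= q := op_ge0 HN Hs Q.
suff : op_norm N Ps <= q by move/le_trans; apply; exact: ltW hQ'.
rewrite -subr_le0.
have q1 : 0 < 2 * (q + 1) by apply: mulr_gt0 => //; apply: ltr_pwDr.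
set c := Num.min d0 (2 * (q + 1))^-1.
have c0 : 0 < c by rewrite lt_min d0pos invr_gt0.
apply: (le0_eps (b := 2 * q * (q + 1) + K) _ c0).
  by apply: addr_ge0 => //; apply: mulr_ge0; [apply: mulr_ge0 | apply: addr_ge0].
move=> e e0 ec.
have ed : e <= d0 by apply: le_trans ec _; rewrite ge_min lexx.
have ec2 : e <= (2 * (q + 1))^-1 by apply: le_trans ec _; rewrite ge_min lexx orbT.
have [Y0 [P [[r0 hm hA hmb hop] [h1 h2]]]] := clus2 e0 ed.
have th0 : 0 <= (q + 1) * e by apply: mulr_ge0; [apply: addr_ge0 | exact: ltW].
have th2 : (q + 1) * e <= 2^-1.
  have qp : 0 < q + 1 by apply: ltr_pwDr.
  apply: le_trans (ler_wpM2l (ltW qp) ec2) _.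
  by rewrite invfM mulrCA mulfV ?mulr1 // gt_eqF.
have th1 : (q + 1) * e < 1.
  by apply: le_lt_trans th2 _; rewrite invf_lt1 ?ltr1n ?ltr0n.
have hpc := near_pc r0 hQ (ltW e0) th1 h2.
have hopP : op_norm N P = proj_const N Y0 := hm.2.
have hd := op_diff HN Hs Ps P.
have hih := inv_half q0 th0 th2.
have : op_norm N Ps <= q + 2 * q * ((q + 1) * e) + K * e.
  apply: le_trans hd _; apply: lerD.
    by rewrite hopP; apply: le_trans hpc hih.
  by rewrite ler_wpM2l.
move=> h; rewrite lerBlDl; apply: le_trans h _; apply: eqle; ring.
Qed.

Lemma mbN D : mb (- D) = mb D.
Proof. by rewrite /mb; apply: eq_bigr => i _; apply: eq_bigr => j _; rewrite mxE normrN. Qed.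

Lemma Ps_NP : A \subset NP N s Ps.
Proof.
apply/fintype.subsetP => t tA.
have [Y1 [P1 [[_ _ hA1 _ _] _]]] := clus2 d0pos (lexx _).
have [x [f [hn1 hc1]]] : exists x f, norming_pair N P1 x f /\ code s x f = t.
  by apply: NP_inv; rewrite hA1.
rewrite -hc1; apply: (NP_mem s).
case: (hn1) => ex ef _; split => //.
apply/eqP; rewrite -subr_eq0 -normr_le0.
apply: (le0_eps (b := nrm x * nrm f + K) _ d0pos).
  by apply: addr_ge0 => //; apply: mulr_ge0; exact: nrm_ge0.
move=> e e0 ed.
have [Y0 [P [[r0 hm hA hmb hop] _]]] := clus2 e0 ed.
have [x' [f' [hn' hc']]] : exists x' f', norming_pair N P x' f' /\ code s x' f' = t.
  by apply: NP_inv; rewrite hA.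
have [ex' ef' hp'] := hn'.
have [??] := norming_uniq HN Hs hn1 hn' (etrans hc1 (esym hc')).
subst x' f'.
have -> : pairing f (x *m Ps) - op_norm N Ps =
          pairing f (x *m (Ps - P)) + (op_norm N P - op_norm N Ps).
  by rewrite mulmxBr pairingBr hp' addrA subrK.
apply: le_trans (ler_normD _ _) _.
rewrite mulrDr; apply: lerD.
  apply: le_trans (pairing_le _ _) _.
  apply: le_trans (ler_wpM2r (nrm_ge0 _) (nrm_mul _ _)) _.
  have hm1 : nrm x * mb (Ps - P) * nrm f <= nrm x * e * nrm f.
    by rewrite ler_wpM2r ?nrm_ge0 // ler_wpM2l ?nrm_ge0.
  by apply: le_trans hm1 _; apply: eqle; ring.
rewrite ler_norml; apply/andP; split.
  rewrite lerNl opprB lerBlDl; apply: le_trans (op_diff HN Hs Ps P) _.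
  by rewrite lerD2l [e * _]mulrC ler_wpM2l // K_ge0.
rewrite lerBlDl; apply: le_trans (op_diff HN Hs P Ps) _.
by rewrite lerD2l -opprB mbN [e * _]mulrC ler_wpM2l // K_ge0.
Qed.

End Limit.

Lemma entry_bound P c : op_norm N P <= c -> forall i j, `|P i j| <= C2 s * c * C1 N.
Proof.
move=> hc i j.
have c0 : 0 <= c by apply: le_trans hc; have := op_ge0 HN Hs P.
have -> : P i j = ((delta_mx 0 i : 'rV[R]_n) *m P) 0 j by rewrite -rowE mxE.
apply: le_trans (coord_le_nrm _ _) _.
apply: le_trans (nrm_le_N HN Hs _) _.
rewrite -mulrA ler_wpM2l ?C2_ge0 //.
apply: le_trans (op_le HN Hs _ _) _.
apply: ler_pM => //; first exact: op_ge0 HN Hs P; first exact: N_ge0.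
rewrite /C1 (bigD1 i) //= lerDl; apply: sumr_ge0 => j' _; exact: N_ge0.
Qed.

Lemma pigeon :
  (forall r : R, 0 < r -> exists Y0 P, [/\ \rank Y0 = k, hdist N Y Y0 <= r,
       is_min_proj N Y0 P & ~ at_most_norming N P m]) ->
  exists A : {set codeT s}, (m < #|A|)%N /\ forall r : R, 0 < r -> exists Y0 P,
       [/\ \rank Y0 = k, hdist N Y Y0 <= r, is_min_proj N Y0 P & NP N s P = A].
Proof.
move=> hbad; apply: contrapT => hno.
have hd : forall A : {set codeT s}, exists d : R, 0 < d /\ ((m < #|A|)%N ->
    forall Y0 P, \rank Y0 = k -> hdist N Y Y0 <= d -> is_min_proj N Y0 P -> NP N s P != A).
  move=> A; case: (ltnP m #|A|) => hA; last first.
    by exists 1; split => // /(leq_trans hA); rewrite ltnn.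
  case: (pselect (forall r : R, 0 < r -> exists Y0 P, [/\ \rank Y0 = k, hdist N Y Y0 <= r,
        is_min_proj N Y0 P & NP N s P = A])) => [h|h].
    by exfalso; apply: hno; exists A.
  have [r /not_implyP [r0 hr]] := (existsNP _).2 h.
  exists r; split => // _ Y0 P r1 hdl hm; apply/eqP => e; apply: hr.
  by exists Y0, P; split.
have [dd hdd] := choice hd.
set r0 := \big[Num.min/1]_(A : {set codeT s}) dd A.
have r0pos : 0 < r0.
  rewrite /r0; elim/big_ind: _ => //; first by move=> a b a0 b0; rewrite lt_min a0 b0.
  by move=> A _; case: (hdd A).
have [Y0 [P [r1 hdl hm hna]]] := hbad r0 r0pos.
have hA : (m < #|NP N s P|)%N.
  rewrite ltnNge; apply/negP => hle; apply: hna. have := @at_most_NP R n N s HN Hs P m. move=> hh. apply: hh. exact: hle.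
have [_ /(_ hA Y0 P r1) h] := hdd (NP N s P).
have : r0 <= dd (NP N s P) by rewrite /r0; apply: bigmin_le.
by move=> hr; move: (h (le_trans hdl hr) hm); rewrite eqxx.
Qed.

Lemma main_sec : exists r : R, 0 < r /\
    forall Y0 : 'M[R]_n, \rank Y0 = k -> hdist N Y Y0 <= r ->
      forall P, is_min_proj N Y0 P -> at_most_norming N P m.
Proof.
apply: contrapT => hno.
have hbad : forall r : R, 0 < r -> exists Y0 P, [/\ \rank Y0 = k, hdist N Y Y0 <= r,
       is_min_proj N Y0 P & ~ at_most_norming N P m].
  move=> r r0; apply: contrapT => h; apply: hno; exists r; split => // Y0 r1 hdl P hm.
  by apply: contrapT => ha; apply: h; exists Y0, P; split.
have [A [hAm hA]] := pigeon hbad.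
have hQ0 := proj_exists Y.
set Q0 := proj_mx Y (Y^C)%MS in hQ0.
set c0 := op_norm N Q0.
have c0ge : 0 <= c0 by have := op_ge0 HN Hs Q0.
have c1 : 0 < c0 + 1 by apply: ltr_pwDr.
set d0 := (4 * (c0 + 1))^-1.
have d0pos : 0 < d0 by rewrite invr_gt0 mulr_gt0.
set M0 := 2 * c0.
have M0pos : 0 <= M0 by apply: mulr_ge0.
have famb : forall (dl : R) (Y0 : 'M[R]_n) P, 0 < dl -> dl <= d0 -> \rank Y0 = k ->
    hdist N Y Y0 <= dl -> is_min_proj N Y0 P -> op_norm N P <= M0.
  move=> dl Y0 P dl0 dld r0 hdl hm.
  have dl2 : dl < 2 * dl by rewrite ltr_pMl // ltr1n.
  have rY' : (0 < \rank Y)%N by rewrite rY.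
  have r0' : (0 < \rank Y0)%N by rewrite r0.
  have [_ h2] := approx_hd HN hdl dl2 rY' r0'.
  have th0 : 0 <= (c0 + 1) * (2 * dl) by apply: mulr_ge0; [exact: ltW | apply: mulr_ge0 => //; exact: ltW].
  have th2 : (c0 + 1) * (2 * dl) <= 2^-1.
    apply: le_trans (ler_wpM2l (ltW c1) (ler_wpM2l (ler0n _ 2) dld)) _.
    apply: eqle; rewrite /d0; field.
    by rewrite gt_eqF.
  have th1 : (c0 + 1) * (2 * dl) < 1.
    by apply: le_lt_trans th2 _; rewrite invf_lt1 ?ltr1n ?ltr0n.
  have d2 : 0 <= 2 * dl by apply: mulr_ge0 => //; exact: ltW.
  rewrite hm.2; apply: le_trans (near_pc r0 hQ0 d2 th1 h2) _.
  apply: le_trans (inv_half c0ge th0 th2) _.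
  have H : 2 * c0 * ((c0 + 1) * (2 * dl)) <= 2 * c0 * 2^-1.
    by rewrite ler_wpM2l // mulr_ge0.
  apply: le_trans (lerD (lexx c0) H) _.
  by apply: eqle; rewrite /M0; field.
set Mb := C2 s * M0 * C1 N.
set Fam := fun dl : R => [set v : 'rV[R]_(n * n) | exists Y0 P, [/\ \rank Y0 = k,
    hdist N Y Y0 <= dl, is_min_proj N Y0 P, NP N s P = A & v = mxvec P]].
set F := filter_from [set dl : R | 0 < dl <= d0] Fam.
have FF : ProperFilter F.
  apply: filter_from_proper.
    apply: filter_from_filter; first by exists d0; rewrite /= d0pos lexx.
    move=> i j /andP[i0 id] /andP[j0 jd]; exists (Num.min i j).
      by rewrite /= lt_min i0 j0 ge_min id.
    move=> v [Y0 [P [r0 hdl hm hA' ->]]]; split; exists Y0, P; split => //;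
      apply: le_trans hdl _; rewrite ge_min lexx ?orbT //.
  move=> dl /andP[dl0 _]; have [Y0 [P [r0 hdl hm hA']]] := hA dl dl0.
  by exists (mxvec P), Y0, P.
have FK : F [set v : 'rV[R]_(n * n) | forall i, `[- Mb, Mb]%classic (v ord0 i)].
  exists d0; first by rewrite /= d0pos lexx.
  move=> v [Y0 [P [r0 hdl hm hA' ->]]] i.
  case: (mxvec_indexP i) => a b; rewrite /= mxvecE in_itv /= -ler_norml.
  apply: entry_bound; exact: famb d0pos (lexx _) r0 hdl hm.
have [p [_ cp]] := rV_compact (fun _ => @segment_compact R (- Mb) Mb) FF FK.
set Ps := vec_mx p.
have clus : forall (e dl : R), 0 < e -> 0 < dl -> dl <= d0 ->
  exists Y0 P, [/\ \rank Y0 = k, hdist N Y Y0 <= dl, is_min_proj N Y0 P, NP N s P = A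
                 & mb (Ps - P) <= e].
  move=> e dl e0 dl0 dld.
  have nn : 0 < (n * n)%:R + 1 :> R by apply: ltr_pwDr.
  set e' := e / ((n * n)%:R + 1).
  have e'0 : 0 < e' by rewrite divr_gt0.
  have FA : F (Fam dl) by exists dl => //=; rewrite dl0 dld.
  have [v [[Y0 [P [r0 hdl hm hA' ve]]] hb]] := cp (Fam dl) (ball p e') FA (nbhsx_ballx p e' e'0).
  exists Y0, P; split => //.
  have hij : forall i j, `|(Ps - P) i j| <= e'.
    move=> i j; move: hb => [_ hb]; have := hb ord0 (mxvec_index i j).
    by rewrite /ball /= ve mxvecE !mxE => /ltW.
  apply: (@le_trans _ _ (\sum_(i < n) \sum_(j < n) e')).
    by apply: ler_sum => i _; apply: ler_sum => j _; exact: hij.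
  rewrite big_const_ord iter_addr_0 big_const_ord iter_addr_0 -mulrnA -mulr_natr /e' mulrAC ler_pdivrMr //.
  by rewrite ler_pM2l // lerDl ler01.
have hPs : is_min_proj N Y Ps.
  split; first exact: (Ps_proj d0pos M0pos famb clus).
  apply/le_anti; rewrite (Ps_op d0pos famb clus) /=.
  have := pc_le HN Hs (Ps_proj d0pos M0pos famb clus). by move=> ->.
have h1 := NP_at_most s (hyp hPs).
have h2 := subset_leq_card (Ps_NP d0pos famb clus).
by move: (leq_trans h2 h1); rewrite leqNgt hAm.
Qed.

End Main.

Theorem mainTheorem16 (R : realType) (n k m : nat) (N : 'rV[R]_n -> R)
    (Y : 'M[R]_n) :
  is_norm N -> polyhedral N ->
  (2 <= k)%N -> (k <= n.-1)%N -> (0 < m)%N ->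
  \rank Y = k ->
  (forall P, is_min_proj N Y P -> at_most_norming N P m) ->
  exists r : R, 0 < r /\
    forall Y0 : 'M[R]_n, \rank Y0 = k -> hdist N Y Y0 <= r ->
      forall P, is_min_proj N Y0 P -> at_most_norming N P m.
Proof.
move=> HN [s Hs] hk _ _ rY hyp.
have k0 : (0 < k)%N by apply: leq_trans hk.
exact: (main_sec HN Hs k0 rY hyp).
Qed.
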